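(* Let $(E,C)$ be a configuration structure that is closed under nonempty intersections. Then: (1) $C$ is closed under directed unions iff $(E,C)$ has finite conflict; (2) $C$ is weakly coherent iff $(E,C)$ is rooted and has binary conflict; (3) $C$ is closed under finitely compatible unions iff it is closed under finitely consistent unions; (4) $C$ is coherent iff $(E,C)$ is rooted and $C$ is closed under pairwise consistent unions.
   Context: $C\subseteq\mathcal{P}(E)$. $X$ is consistent if $X\subseteq z$ for some $z\in C$; finitely (pairwise) consistent if all its finite subsets (subsets of size $\le2$) are consistent. Closed under nonempty intersections: $\emptyset\ne A\subseteq C\Rightarrow\bigcap A\in C$. Rooted: $\emptyset\in C$. Finite conflict: every $X\subseteq E$ such that each finite $Y\subseteq X$ satisfies $Y\subseteq z\subseteq X$ for some $z\in C$ belongs to $C$; binary conflict: same with $|Y|\le 2$. Closed under directed unions: for every nonempty $A\subseteq C$ such that for all $x,y\in A$ there is $z\in A$ with $x\cup y\subseteq z$, $\bigcup A\in C$. Weakly coherent: for every $A\subseteq C$ such that for all $x,y\in A$ there is $z\in C$ with $x\cup y\subseteq z\subseteq\bigcup A$, $\bigcup A\in C$. Closed under finitely compatible unions: $A\subseteq C$ and $\bigcup F$ consistent for every finite $F\subseteq A$ imply $\bigcup A\in C$. Coherent: $A\subseteq C$ and $x\cup y$ consistent for all $x,y\in A$ imply $\bigcup A\in C$. Closed under finitely (pairwise) consistent unions: $A\subseteq C$ with $\bigcup A$ finitely (pairwise) consistent implies $\bigcup A\in C$. *)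

(* Defs.v *)
From Stdlib Require Import List.

Set Implicit Arguments.

Definition pset (T : Type) := T -> Prop.

Definition subset {T : Type} (X Y : pset T) : Prop := forall e, X e -> Y e.

Definition union2 {T : Type} (X Y : pset T) : pset T := fun e => X e \/ Y e.

Definition bigcup {T : Type} (A : pset (pset T)) : pset T :=
  fun e => exists x, A x /\ x e.

Definition bigcap {T : Type} (A : pset (pset T)) : pset T :=
  fun e => forall x, A x -> x e.

Definition emptyset {T : Type} : pset T := fun _ => False.

Definition finite {T : Type} (Y : pset T) : Prop :=
  exists l : list T, forall e, Y e -> In e l.

Definition atmost2 {T : Type} (Y : pset T) : Prop :=
  exists l : list T, length l <= 2 /\ forall e, Y e -> In e l.

Section ConfStruct.
Variable E : Type.
Variable C : pset (pset E).

Definition consistent (X : pset E) : Prop := exists z, C z /\ subset X z.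

Definition finitely_consistent (X : pset E) : Prop :=
  forall Y, subset Y X -> finite Y -> consistent Y.

Definition pairwise_consistent (X : pset E) : Prop :=
  forall Y, subset Y X -> atmost2 Y -> consistent Y.

Definition closed_nonempty_intersections : Prop :=
  forall A : pset (pset E), subset A C -> (exists x, A x) -> C (bigcap A).

Definition rooted : Prop := C emptyset.

Definition finite_conflict : Prop :=
  forall X : pset E,
    (forall Y, subset Y X -> finite Y -> exists z, C z /\ subset Y z /\ subset z X) ->
    C X.

Definition binary_conflict : Prop :=
  forall X : pset E,
    (forall Y, subset Y X -> atmost2 Y -> exists z, C z /\ subset Y z /\ subset z X) ->
    C X.

Definition closed_directed_unions : Prop :=
  forall A : pset (pset E), subset A C -> (exists x, A x) ->
    (forall x y, A x -> A y -> exists z, A z /\ subset (union2 x y) z) ->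
    C (bigcup A).

Definition weakly_coherent : Prop :=
  forall A : pset (pset E), subset A C ->
    (forall x y, A x -> A y ->
       exists z, C z /\ subset (union2 x y) z /\ subset z (bigcup A)) ->
    C (bigcup A).

Definition closed_finitely_compatible_unions : Prop :=
  forall A : pset (pset E), subset A C ->
    (forall F : pset (pset E), subset F A -> finite F -> consistent (bigcup F)) ->
    C (bigcup A).

Definition coherent : Prop :=
  forall A : pset (pset E), subset A C ->
    (forall x y, A x -> A y -> consistent (union2 x y)) ->
    C (bigcup A).

Definition closed_finitely_consistent_unions : Prop :=
  forall A : pset (pset E), subset A C ->
    finitely_consistent (bigcup A) -> C (bigcup A).

Definition closed_pairwise_consistent_unions : Prop :=
  forall A : pset (pset E), subset A C ->
    pairwise_consistent (bigcup A) -> C (bigcup A).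

End ConfStruct.

(* Main.v *)
Require Import Defs.
From Stdlib Require Import List Classical FunctionalExtensionality PropExtensionality.

Lemma pset_ext {T} (X Y : pset T) : (forall e, X e <-> Y e) -> X = Y.
Proof. intros H; extensionality e; apply propositional_extensionality; auto. Qed.

Definition Zof {E} (C : pset (pset E)) (P : pset E -> Prop) : pset E :=
  bigcap (fun z => C z /\ P z).

Lemma Z_C {E} (C : pset (pset E)) P : closed_nonempty_intersections C ->
  (exists z, C z /\ P z) -> C (Zof C P).
Proof. intros H [z Hz]. apply H. intros x [Hx _]; exact Hx. exists z; exact Hz. Qed.

Lemma Z_le {E} (C : pset (pset E)) P w : C w -> P w -> subset (Zof C P) w.
Proof. intros Hw Pw e He. apply He. auto. Qed.

Lemma Z_ge {E} (C : pset (pset E)) (P : pset E -> Prop) Y :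
  (forall z, P z -> subset Y z) -> subset Y (Zof C P).
Proof. intros H e Ye x [_ Px]. exact (H x Px e Ye). Qed.

Lemma atmost2_cases {E} (A : pset (pset E)) Y : atmost2 Y -> subset Y (bigcup A) ->
  (forall e, ~ Y e) \/ exists x y, A x /\ A y /\ subset Y (union2 x y).
Proof.
  intros [l [Hl HY]] Hs.
  destruct l as [|a [|b [|c l]]]; simpl in Hl.
  - left. intros e Ye. exact (HY e Ye).
  - destruct (classic (Y a)) as [Ya|Ya].
    + destruct (Hs a Ya) as [x [Ax xa]]. right. exists x, x. split; [|split]; auto.
      intros e Ye. destruct (HY e Ye) as [<-|[]]. left; auto.
    + left. intros e Ye. destruct (HY e Ye) as [<-|[]]. auto.
  - destruct (classic (Y a)) as [Ya|Ya]; destruct (classic (Y b)) as [Yb|Yb].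
    + destruct (Hs a Ya) as [x [Ax xa]]. destruct (Hs b Yb) as [y [Ay yb]].
      right. exists x, y. split; [|split]; auto.
      intros e Ye. destruct (HY e Ye) as [<-|[<-|[]]]; [left|right]; auto.
    + destruct (Hs a Ya) as [x [Ax xa]]. right. exists x, x. split; [|split]; auto.
      intros e Ye. destruct (HY e Ye) as [<-|[<-|[]]]. left; auto. contradiction.
    + destruct (Hs b Yb) as [x [Ax xa]]. right. exists x, x. split; [|split]; auto.
      intros e Ye. destruct (HY e Ye) as [<-|[<-|[]]]. contradiction. left; auto.
    + left. intros e Ye. destruct (HY e Ye) as [<-|[<-|[]]]; auto.
  - exfalso. repeat apply le_S_n in Hl; inversion Hl.
Qed.

Lemma finite_union2 {T} (Y Y' : pset T) : finite Y -> finite Y' -> finite (union2 Y Y').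
Proof. intros [l Hl] [l' Hl']. exists (l ++ l'). intros e [H|H]; apply in_or_app; auto. Qed.

Lemma finite_empty {T} : finite (@emptyset T).
Proof. exists nil. intros e []. Qed.

Lemma finite_single {T} (a : T) : finite (fun e => e = a).
Proof. exists (a :: nil). intros e ->. left; auto. Qed.

Lemma part1a E (C : pset (pset E)) : closed_nonempty_intersections C ->
  closed_directed_unions C -> finite_conflict C.
Proof.
  intros HI HD X HX.
  set (Zf := fun Y => Zof C (fun z => subset Y z /\ subset z X)).
  assert (ZC : forall Y, subset Y X -> finite Y -> C (Zf Y)).
  { intros Y s f. apply Z_C; [exact HI|]. destruct (HX Y s f) as [z [? [? ?]]]. eauto. }
  assert (ZX : forall Y, subset Y X -> finite Y -> subset (Zf Y) X).
  { intros Y s f e He. destruct (HX Y s f) as [z [? [? ?]]]. apply H1. apply He. auto. }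
  set (A := fun x => exists Y, subset Y X /\ finite Y /\ x = Zf Y).
  assert (Heq : bigcup A = X).
  { apply pset_ext. intros e; split.
    - intros [x [[Y [s [f ->]]] He]]. exact (ZX Y s f e He).
    - intros Xe. exists (Zf (fun a => a = e)). split.
      + exists (fun a => a = e). split; [intros a ->; auto|split; auto using finite_single].
      + refine (Z_ge C _ (fun a => a = e) _ e eq_refl). intros z [H _]; exact H. }
  rewrite <- Heq. apply HD.
  - intros x [Y [s [f ->]]]. auto.
  - exists (Zf emptyset). exists emptyset. split; [intros e []|split; auto using finite_empty].
  - intros x y [Y [s [f ->]]] [Y' [s' [f' ->]]].
    assert (s2 : subset (union2 Y Y') X) by (intros e [H|H]; auto).
    assert (f2 := finite_union2 _ _ f f').
    exists (Zf (union2 Y Y')). split. exists (union2 Y Y'); auto.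
    assert (Hs : subset (union2 Y Y') (Zf (union2 Y Y'))).
    { apply Z_ge. intros z [H _]; exact H. }
    intros e [He|He]; (eapply Z_le; [apply ZC; auto| |exact He]); split; auto.
    + intros a Ya. apply Hs. left; auto.
    + intros a Ya. apply Hs. right; auto.
Qed.

Lemma part1b E (C : pset (pset E)) : finite_conflict C -> closed_directed_unions C.
Proof.
  intros HF A HA [x0 Ax0] HD. apply HF. intros Y s [l Hl].
  assert (forall l : list E, exists z, A z /\ forall e, In e l -> Y e -> z e).
  { induction l0 as [|a l0 [z [Az Hz]]].
    - exists x0. split; auto. intros e [].
    - destruct (classic (Y a)) as [Ya|Ya].
      + destruct (s a Ya) as [x [Ax xa]]. destruct (HD x z Ax Az) as [w [Aw Hw]].
        exists w. split; auto. intros e [<-|He] Ye; apply Hw; [left|right]; auto.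
      + exists z. split; auto. intros e [<-|He] Ye; [contradiction|auto]. }
  destruct (H l) as [z [Az Hz]]. exists z. split; [auto|split].
  - intros e Ye. apply Hz; auto.
  - intros e ze. exists z; auto.
Qed.

Lemma part2a E (C : pset (pset E)) : closed_nonempty_intersections C ->
  weakly_coherent C -> rooted C /\ binary_conflict C.
Proof.
  intros HI HW. split.
  - unfold rooted.
    replace (@emptyset E) with (bigcup (fun _ : pset E => False)).
    + apply HW. intros x []. intros x y [].
    + apply pset_ext. intros e; split. intros [x [[] _]]. intros [].
  - intros X HX.
    set (Ze := fun a => Zof C (fun z => z a /\ subset z X)).
    assert (W : forall a b, X a -> X b -> exists w, C w /\ w a /\ w b /\ subset w X).
    { intros a b Xa Xb. destruct (HX (fun e => e = a \/ e = b)) as [w [Cw [Hw1 Hw2]]].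
      - intros e [->| ->]; auto.
      - exists (a :: b :: nil). split; auto. intros e [->| ->]; simpl; auto.
      - exists w. repeat split; auto. }
    assert (ZX : forall a, X a -> subset (Ze a) X).
    { intros a Xa e He. destruct (W a a Xa Xa) as [w [Cw [wa [_ wX]]]].
      apply wX. apply He. auto. }
    set (A := fun x => exists a, X a /\ x = Ze a).
    assert (Heq : bigcup A = X).
    { apply pset_ext. intros e; split.
      - intros [x [[a [Xa ->]] He]]. exact (ZX a Xa e He).
      - intros Xe. exists (Ze e). split. exists e; auto.
        intros x [_ [H _]]; exact H. }
    rewrite <- Heq. apply HW.
    + intros x [a [Xa ->]]. apply Z_C; [exact HI|]. destruct (W a a Xa Xa) as [w [? [? [? ?]]]]. eauto.
    + intros x y [a [Xa ->]] [b [Xb ->]]. destruct (W a b Xa Xb) as [w [Cw [wa [wb wX]]]].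
      exists w. split; auto. split.
      * intros e [He|He]; [apply (Z_le C _ w Cw (conj wa wX) e He) | apply (Z_le C _ w Cw (conj wb wX) e He)].
      * rewrite Heq; auto.
Qed.

Lemma part2b E (C : pset (pset E)) : rooted C /\ binary_conflict C -> weakly_coherent C.
Proof.
  intros [HR HB] A HA HW. apply HB. intros Y s a2.
  destruct (atmost2_cases A Y a2 s) as [Hn|[x [y [Ax [Ay Hs]]]]].
  - exists emptyset. split; auto. split. intros e Ye; exact (Hn e Ye). intros e [].
  - destruct (HW x y Ax Ay) as [z [Cz [Hz1 Hz2]]]. exists z. split; auto. split; auto.
    intros e Ye; auto.
Qed.

Lemma fcons_consistent E (C : pset (pset E)) : closed_nonempty_intersections C ->
  closed_finitely_compatible_unions C -> forall X, finitely_consistent C X -> consistent C X.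
Proof.
  intros HI HU X HX.
  set (Zy := fun Y => Zof C (fun z => subset Y z)).
  assert (ZC : forall Y, subset Y X -> finite Y -> C (Zy Y)).
  { intros Y s f. apply Z_C; [exact HI|]. destruct (HX Y s f) as [z [? ?]]. eauto. }
  assert (Zin : forall Y, subset Y (Zy Y)).
  { intros Y. apply Z_ge. auto. }
  assert (Zmono : forall Y Y', subset Y' X -> finite Y' -> subset Y Y' -> subset (Zy Y) (Zy Y')).
  { intros Y Y' s f sub. apply Z_le. auto. intros e Ye. apply Zin. auto. }
  set (A := fun x => exists Y, subset Y X /\ finite Y /\ x = Zy Y).
  assert (CU : C (bigcup A)).
  { apply HU.
    - intros x [Y [s [f ->]]]. auto.
    - intros F sF [L HL].
      assert (forall L : list (pset E), exists Y, subset Y X /\ finite Y /\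
                forall x, In x L -> A x -> subset x (Zy Y)).
      { induction L0 as [|x0 L0 [Y [s [f HY]]]].
        - exists emptyset. split. intros e []. split. apply finite_empty. intros x [].
        - destruct (classic (A x0)) as [[Y0 [s0 [f0 ->]]]|nA].
          + assert (s2 : subset (union2 Y Y0) X) by (intros e [H|H]; auto).
            exists (union2 Y Y0). split; auto. split. apply finite_union2; auto.
            intros x [<-|Hx] Ax.
            * apply Zmono; auto. apply finite_union2; auto. intros e H; right; auto.
            * intros e He. exact (Zmono Y (union2 Y Y0) s2 (finite_union2 _ _ f f0) (fun a H => or_introl H) e (HY x Hx Ax e He)).
          + exists Y. split; auto. split; auto. intros x [<-|Hx] Ax; [contradiction|auto]. }
      destruct (H L) as [Y [s [f HY]]]. exists (Zy Y). split; auto.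
      intros e [x [Fx xe]]. apply (HY x); auto. }
  exists (bigcup A). split; auto.
  intros e Xe. exists (Zy (fun a => a = e)). split.
  - exists (fun a => a = e). split. intros a ->; auto. split; auto. apply finite_single.
  - apply Zin. reflexivity.
Qed.

Lemma part3a E (C : pset (pset E)) : closed_nonempty_intersections C ->
  closed_finitely_compatible_unions C -> closed_finitely_consistent_unions C.
Proof.
  intros HI HU A HA HF.
  destruct (fcons_consistent E C HI HU _ HF) as [w [Cw Hw]].
  apply HU; auto. intros F sF _. exists w. split; auto.
  intros e [x [Fx xe]]. apply Hw. exists x. auto.
Qed.

Lemma part3b E (C : pset (pset E)) :
  closed_finitely_consistent_unions C -> closed_finitely_compatible_unions C.
Proof.
  intros HU A HA HF. apply HU; auto. intros Y s [l Hl].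
  assert (forall l : list E, exists L : list (pset E), (forall x, In x L -> A x) /\
            forall e, In e l -> Y e -> exists x, In x L /\ x e).
  { induction l0 as [|a l0 [L [HL1 HL2]]].
    - exists nil. split. intros x []. intros e [].
    - destruct (classic (Y a)) as [Ya|Ya].
      + destruct (s a Ya) as [x [Ax xa]]. exists (x :: L). split.
        * intros y [<-|Hy]; auto.
        * intros e [<-|He] Ye. exists x; split; auto; left; auto.
          destruct (HL2 e He Ye) as [y [? ?]]. exists y; split; auto; right; auto.
      + exists L. split; auto. intros e [<-|He] Ye; [contradiction|auto]. }
  destruct (H l) as [L [HL1 HL2]].
  destruct (HF (fun x => In x L /\ A x)) as [z [Cz Hz]].
  - intros x [_ Ax]; auto.
  - exists L. intros x [H1 _]; auto.
  - exists z. split; auto. intros e Ye. destruct (HL2 e (Hl e Ye) Ye) as [x [Lx xe]].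
    apply Hz. exists x. split; auto.
Qed.

Lemma part4a E (C : pset (pset E)) : closed_nonempty_intersections C ->
  coherent C -> rooted C /\ closed_pairwise_consistent_unions C.
Proof.
  intros HI HC. split.
  - unfold rooted.
    replace (@emptyset E) with (bigcup (fun _ : pset E => False)).
    + apply HC. intros x []. intros x y [].
    + apply pset_ext. intros e; split. intros [x [[] _]]. intros [].
  - intros A HA HP. set (X := bigcup A).
    set (Ze := fun a => Zof C (fun z => z a)).
    assert (W : forall a b, X a -> X b -> exists w, C w /\ w a /\ w b).
    { intros a b Xa Xb. destruct (HP (fun e => e = a \/ e = b)) as [w [Cw Hw]].
      - intros e [->| ->]; auto.
      - exists (a :: b :: nil). split; auto. intros e [->| ->]; simpl; auto.
      - exists w. repeat split; auto. }
    set (A' := fun x => exists a, X a /\ x = Ze a).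
    assert (CU : C (bigcup A')).
    { apply HC.
      - intros x [a [Xa ->]]. apply Z_C; [exact HI|]. destruct (W a a Xa Xa) as [w [? [? ?]]]. eauto.
      - intros x y [a [Xa ->]] [b [Xb ->]]. destruct (W a b Xa Xb) as [w [Cw [wa wb]]].
        exists w. split; auto.
        intros e [He|He]; [apply (Z_le C _ w Cw wa e He) | apply (Z_le C _ w Cw wb e He)]. }
    apply HC; auto. intros x y Ax Ay. exists (bigcup A'). split; auto.
    intros e He. assert (Xe : X e) by (destruct He as [He|He]; [exists x|exists y]; auto).
    exists (Ze e). split. exists e; auto. intros z [_ H]; exact H.
Qed.

Lemma part4b E (C : pset (pset E)) :
  rooted C /\ closed_pairwise_consistent_unions C -> coherent C.
Proof.
  intros [HR HP] A HA HC. apply HP; auto. intros Y s a2.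
  destruct (atmost2_cases A Y a2 s) as [Hn|[x [y [Ax [Ay Hs]]]]].
  - exists emptyset. split; [exact HR|]. intros e Ye; exact (Hn e Ye).
  - destruct (HC x y Ax Ay) as [z [Cz Hz]]. exists z. split; auto.
    intros e Ye; auto.
Qed.

Theorem mainTheorem14 (E : Type) (C : pset (pset E)) :
  closed_nonempty_intersections C ->
  (closed_directed_unions C <-> finite_conflict C) /\
  (weakly_coherent C <-> rooted C /\ binary_conflict C) /\
  (closed_finitely_compatible_unions C <-> closed_finitely_consistent_unions C) /\
  (coherent C <-> rooted C /\ closed_pairwise_consistent_unions C).
Proof.
  intros HI. split; [|split; [|split]]; split.
  - apply part1a; auto.
  - apply part1b.
  - apply part2a; auto.
  - apply part2b.
  - apply part3a; auto.
  - apply part3b.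
  - apply part4a; auto.
  - apply part4b.
Qed.
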